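(* Let $\ell_n>0$, $\sigma_{n,0}>0$, $\sigma_{n,1}\ge0$, $\sigma_{n,-1}\ge0$, $\kappa_n\in\mathbb R$ for $n\in\mathbb N$, and assume $$\limsup_{n\to\infty}\sigma_{n,1}<\infty,\quad \liminf_{n\to\infty}\sigma_{n,0}>0,\quad \limsup_{n\to\infty}\sigma_{n,-1}<\infty,$$ $$0<\liminf_{n\to\infty}\sqrt{\ell_{n+1}/\ell_n}\le\limsup_{n\to\infty}\sqrt{\ell_{n+1}/\ell_n}<\infty,\qquad \limsup_{n\to\infty}\frac{|\kappa_n|}{\sqrt{\ell_n}}<\infty .$$ If a real sequence $(x_n)_{n\in\mathbb N}$ (with some $x_0\in\mathbb R$) satisfies $$\ell_n = x_n\big(\sigma_{n,1}x_{n+1}+\sigma_{n,0}x_n+\sigma_{n,-1}x_{n-1}\big)+\kappa_n x_n,\qquad n\in\mathbb N,$$ then $\liminf_{n\to\infty}x_n/\sqrt{\ell_n}>-\infty$ if and only if $\limsup_{n\to\infty}x_n/\sqrt{\ell_n}<\infty$.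
   Context: $\mathbb N=\{1,2,3,\dots\}$. The sequence $(x_n)$ need not be positive. *)

(* Defs.v *)
From Stdlib Require Import Reals Lra Lia.
Open Scope R_scope.

(* Finiteness statements about liminf / limsup of a real sequence
   a : nat -> R, written out via the definitions
   limsup a = inf_N sup_{n>=N} a n,  liminf a = sup_N inf_{n>=N} a n
   (values in the extended reals). *)

Definition limsup_lt_infty (a : nat -> R) : Prop :=
  exists M : R, exists N : nat, forall n : nat, (N <= n)%nat -> a n <= M.

Definition liminf_gt_neg_infty (a : nat -> R) : Prop :=
  exists m : R, exists N : nat, forall n : nat, (N <= n)%nat -> m <= a n.

Definition liminf_pos (a : nat -> R) : Prop :=
  exists c : R, 0 < c /\ exists N : nat, forall n : nat, (N <= n)%nat -> c <= a n.

(* Main.v *)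
Require Import Defs.
From Stdlib Require Import Reals Lra Lia Psatz.
Open Scope R_scope.

Lemma Rdiv_le_0_compat (a b : R) : 0 <= a -> 0 < b -> 0 <= a / b.
Proof. intros. unfold Rdiv. apply Rmult_le_pos; [lra|]. left; apply Rinv_0_lt_compat; lra. Qed.

Lemma key_bound (c0 s0 t P Q k A B K : R) :
  0 < c0 -> c0 <= s0 -> 0 < t -> 0 <= A -> 0 <= B -> 0 <= K ->
  P >= -A -> Q >= -B -> Rabs k <= K ->
  1 = s0 * t * t + t * P + t * Q + k * t ->
  t <= 1 + (1 + A + B + K) / c0.
Proof.
  intros Hc Hs Ht HA HB HK HP HQ Hk E.
  assert (Hk2 : k >= -K) by (pose proof (Rle_abs (-k)); rewrite Rabs_Ropp in *; lra).
  assert (H1 : c0 * t * t - (A + B + K) * t <= 1) by nra.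
  set (D := A + B + K) in *.
  replace (1 + A + B + K) with (1 + D) by (unfold D; ring).
  destruct (Rle_or_lt t (1 + (1 + D) / c0)) as [h|h]; [lra|].
  exfalso.
  assert (h2 : c0 * t > c0 + 1 + D).
  { assert (c0 * (1 + (1 + D) / c0) = c0 + 1 + D) by (field; auto with real). rewrite <- H. apply Rmult_lt_compat_l; lra. }
  assert (t > 1). { assert ((1 + D)/c0 >= 0). { apply Rle_ge. apply Rdiv_le_0_compat; unfold D; lra. } lra. }
  nra.
Qed.

Lemma lowP (s1 S1 r R y mm : R) :
  0 <= s1 <= S1 -> 0 <= r <= R -> y >= -mm -> 0 <= mm ->
  s1 * (r * y) >= -(S1 * R * mm).
Proof. intros. assert (0 <= s1 * r <= S1 * R) by (split; nra). nra. Qed.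

Lemma lowQ (sm1 Sm1 rp cr y mm : R) :
  0 <= sm1 <= Sm1 -> 0 < cr <= rp -> y >= -mm -> 0 <= mm ->
  sm1 * (y / rp) >= -(Sm1 * (mm / cr)).
Proof.
  intros. set (z := y / rp). set (w := mm / cr).
  assert (Ey : y = z * rp) by (unfold z; field; lra).
  assert (Em : mm = w * cr) by (unfold w; field; lra).
  assert (w >= 0) by (unfold w; apply Rle_ge; apply Rdiv_le_0_compat; lra).
  assert (z >= -w).
  { destruct (Rle_or_lt 0 z); [lra|]. nra. }
  nra.
Qed.

Theorem corollary6p2
  (l s0 s1 sm1 kappa x : nat -> R)
  (hl : forall n, (1 <= n)%nat -> 0 < l n)
  (hs0 : forall n, (1 <= n)%nat -> 0 < s0 n)
  (hs1 : forall n, (1 <= n)%nat -> 0 <= s1 n)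
  (hsm1 : forall n, (1 <= n)%nat -> 0 <= sm1 n)
  (H1 : limsup_lt_infty s1)
  (H0 : liminf_pos s0)
  (Hm1 : limsup_lt_infty sm1)
  (Hr1 : liminf_pos (fun n => sqrt (l (S n) / l n)))
  (Hr2 : limsup_lt_infty (fun n => sqrt (l (S n) / l n)))
  (Hk : limsup_lt_infty (fun n => Rabs (kappa n) / sqrt (l n)))
  (Hrec : forall n, (1 <= n)%nat ->
     l n = x n * (s1 n * x (S n) + s0 n * x n + sm1 n * x (pred n)) + kappa n * x n) :
  liminf_gt_neg_infty (fun n => x n / sqrt (l n)) <->
  limsup_lt_infty (fun n => x n / sqrt (l n)).
Proof.
  destruct H1 as [S1 [N1 HS1]].
  destruct Hm1 as [Sm1 [Nm HSm1]].
  destruct H0 as [c0 [Hc0 [N0 HC0]]].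
  destruct Hr1 as [cr [Hcr [Nr HCr]]].
  destruct Hr2 as [R [NR HR]].
  destruct Hk as [K [Nk HK]].
  set (y := fun n => x n / sqrt (l n)).
  set (r := fun n => sqrt (l (S n) / l n)).
  set (Nc := (2 + N1 + Nm + N0 + Nr + NR + Nk)%nat).
  assert (core : forall n, (Nc <= n)%nat ->
    (0 <= s1 n <= S1) /\ (0 <= sm1 n <= Sm1) /\ c0 <= s0 n /\ (0 <= r n <= R)
    /\ (0 < cr <= r (pred n)) /\ Rabs (kappa n / sqrt (l n)) <= K
    /\ 1 = s0 n * y n * y n + y n * (s1 n * (r n * y (S n)))
           + y n * (sm1 n * (y (pred n) / r (pred n))) + (kappa n / sqrt (l n)) * y n).
  { intros n Hn.
    assert (ln : 0 < l n) by (apply hl; lia).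
    assert (lS : 0 < l (S n)) by (apply hl; lia).
    assert (lp : 0 < l (pred n)) by (apply hl; lia).
    assert (sq : 0 < sqrt (l n)) by (apply sqrt_lt_R0; lra).
    assert (sqS : 0 < sqrt (l (S n))) by (apply sqrt_lt_R0; lra).
    assert (sqp : 0 < sqrt (l (pred n))) by (apply sqrt_lt_R0; lra).
    assert (Er : r n = sqrt (l (S n)) / sqrt (l n)) by (unfold r; apply sqrt_div_alt; lra).
    assert (Erp : r (pred n) = sqrt (l n) / sqrt (l (pred n))).
    { unfold r. replace (S (pred n)) with n by lia. apply sqrt_div_alt; lra. }
    assert (Hsq : sqrt (l n) * sqrt (l n) = l n) by (apply sqrt_sqrt; lra).
    split; [split; [apply hs1; lia | apply HS1; lia]|].
    split; [split; [apply hsm1; lia | apply HSm1; lia]|].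
    split; [apply HC0; lia|].
    split; [split; [unfold r; apply sqrt_pos | apply HR; lia]|].
    split; [split; [lra | apply HCr; lia]|].
    split.
    { unfold Rdiv. rewrite Rabs_mult, Rabs_inv. rewrite (Rabs_right (sqrt (l n))) by lra. apply HK; lia. }
    rewrite Er, Erp. unfold y.
    assert (E := Hrec n ltac:(lia)).
    apply (Rmult_eq_reg_r (l n)); [|lra].
    rewrite Rmult_1_l. rewrite E at 1. set (q := sqrt (l n)) in *. rewrite <- Hsq. field. repeat split; lra. }
  assert (S1p : 0 <= S1) by (destruct (core Nc (le_n _)) as [[? ?] _]; lra).
  assert (Sm1p : 0 <= Sm1) by (destruct (core Nc (le_n _)) as [_ [[? ?] _]]; lra).
  assert (Rp : 0 <= R) by (destruct (core Nc (le_n _)) as [_ [_ [_ [[? ?] _]]]]; lra).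
  assert (Kp : 0 <= K).
  { destruct (core Nc (le_n _)) as [_ [_ [_ [_ [_ [h _]]]]]].
    pose proof (Rabs_pos (kappa Nc / sqrt (l Nc))); lra. }
  split.
  - intros [m [Ny Hy]].
    set (mm := Rabs m).
    assert (mp : 0 <= mm) by apply Rabs_pos.
    assert (Hy' : forall n, (Ny <= n)%nat -> y n >= - mm).
    { intros n hn. pose proof (Hy n hn) as H. pose proof (Rle_abs (-m)) as H2.
      rewrite Rabs_Ropp in H2. fold y in H. unfold mm. simpl in H. lra. }
    exists (1 + (1 + S1 * R * mm + Sm1 * (mm / cr) + K) / c0), (Nc + Ny + 1)%nat.
    intros n hn. fold y.
    destruct (core n ltac:(lia)) as [hs1' [hsm1' [hs0' [hr [hrp [hk E]]]]]].
    assert (B0 : 0 <= (1 + S1 * R * mm + Sm1 * (mm / cr) + K) / c0).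
    { apply Rdiv_le_0_compat; [|lra].
      assert (0 <= mm / cr) by (apply Rdiv_le_0_compat; lra).
      assert (0 <= S1 * R * mm) by (apply Rmult_le_pos; [apply Rmult_le_pos|]; lra).
      nra. }
    destruct (Rle_or_lt (y n) 0) as [h|h]; [lra|].
    assert (A1 : 0 <= S1 * R * mm) by (apply Rmult_le_pos; [apply Rmult_le_pos|]; lra).
    assert (A2 : 0 <= Sm1 * (mm / cr)) by (apply Rmult_le_pos; [|apply Rdiv_le_0_compat]; lra).
    pose proof (key_bound c0 (s0 n) (y n) _ _ _ _ _ K Hc0 hs0' h A1 A2 Kp
      (lowP (s1 n) S1 (r n) R (y (S n)) mm hs1' hr (Hy' (S n) ltac:(lia)) mp)
      (lowQ (sm1 n) Sm1 (r (pred n)) cr (y (pred n)) mm hsm1' hrp (Hy' (pred n) ltac:(lia)) mp)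
      hk E).
    replace (1 + S1 * R * mm + Sm1 * (mm / cr) + K) with
      (1 + S1 * R * mm + Sm1 * (mm / cr) + K) by ring. exact H.
  - intros [M [Ny Hy]].
    set (mm := Rabs M).
    assert (mp : 0 <= mm) by apply Rabs_pos.
    assert (Hy' : forall n, (Ny <= n)%nat -> - y n >= - mm).
    { intros n hn. pose proof (Hy n hn) as H. pose proof (Rle_abs M) as H2.
      fold y in H. unfold mm. simpl in H. lra. }
    exists (-(1 + (1 + S1 * R * mm + Sm1 * (mm / cr) + K) / c0)), (Nc + Ny + 1)%nat.
    intros n hn. fold y.
    destruct (core n ltac:(lia)) as [hs1' [hsm1' [hs0' [hr [hrp [hk E]]]]]].
    assert (B0 : 0 <= (1 + S1 * R * mm + Sm1 * (mm / cr) + K) / c0).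
    { apply Rdiv_le_0_compat; [|lra].
      assert (0 <= mm / cr) by (apply Rdiv_le_0_compat; lra).
      assert (0 <= S1 * R * mm) by (apply Rmult_le_pos; [apply Rmult_le_pos|]; lra).
      nra. }
    destruct (Rle_or_lt 0 (y n)) as [h|h]; [lra|].
    assert (h' : 0 < - y n) by lra.
    assert (A1 : 0 <= S1 * R * mm) by (apply Rmult_le_pos; [apply Rmult_le_pos|]; lra).
    assert (A2 : 0 <= Sm1 * (mm / cr)) by (apply Rmult_le_pos; [|apply Rdiv_le_0_compat]; lra).
    assert (hk' : Rabs (- (kappa n / sqrt (l n))) <= K) by (rewrite Rabs_Ropp; exact hk).
    assert (E' : 1 = s0 n * (- y n) * (- y n) + (- y n) * (s1 n * (r n * (- y (S n))))
           + (- y n) * (sm1 n * ((- y (pred n)) / r (pred n)))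
           + (- (kappa n / sqrt (l n))) * (- y n)).
    { rewrite E. unfold Rdiv. ring. }
    pose proof (key_bound c0 (s0 n) (- y n) _ _ _ _ _ K Hc0 hs0' h' A1 A2 Kp
      (lowP (s1 n) S1 (r n) R (- y (S n)) mm hs1' hr (Hy' (S n) ltac:(lia)) mp)
      (lowQ (sm1 n) Sm1 (r (pred n)) cr (- y (pred n)) mm hsm1' hrp (Hy' (pred n) ltac:(lia)) mp)
      hk' E').
    lra.
Qed.
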